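(* For every $d\ge 1$ there is a constant $C_d$ such that the following holds. Let $\sigma\in(0,1)$ and let $L$ be a finite set of closed line segments in $\mathbb{R}^d$ such that (i) $L$ is $\sigma$-exposed and (ii) $\bigcap_{s\in L} s\neq\emptyset$. Then $|L|\le C_d/\sigma^{d+2}$.
   Context: For sets $X, Y\subseteq\mathbb{R}^d$ and $\sigma>0$, $X$ $\sigma$-shadows $Y$ if $\max_{q\in Y} \mathrm{dist}(q, X) \le \sigma\cdot \mathrm{diam}(Y)$, where $\mathrm{dist}(q,X)=\min_{p\in X}\|q-p\|$. A set of objects is $\sigma$-exposed if no object in the set $\sigma$-shadows another (distinct) object of the set. *)

(* Defs.v *)
From Stdlib Require Import Reals List.
Open Scope R_scope.

(* A point of R^d is represented as a function nat -> R whose coordinates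
   of index >= d vanish (see [in_Rd]). *)
Definition point := nat -> R.

Definition in_Rd (d : nat) (x : point) : Prop := forall i, (d <= i)%nat -> x i = 0.

Fixpoint sqdist (n : nat) (x y : point) : R :=
  match n with
  | O => 0
  | S k => sqdist k x y + (x k - y k) ^ 2
  end.

Definition dist (d : nat) (x y : point) : R := sqrt (sqdist d x y).

Definition segment := (point * point)%type.

Definition in_seg (s : segment) (x : point) : Prop :=
  exists t, 0 <= t <= 1 /\ forall i, x i = fst s i + t * (snd s i - fst s i).

Definition is_segment (d : nat) (s : segment) : Prop :=
  in_Rd d (fst s) /\ in_Rd d (snd s) /\ fst s <> snd s.

Definition seg_diam (d : nat) (s : segment) : R := dist d (fst s) (snd s).

(* X sigma-shadows Y : max_{q in Y} dist(q, X) <= sigma * diam(Y).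
   Since X is compact, dist(q,X) is attained, so this says: every q in Y has
   some p in X with |q - p| <= sigma * diam(Y). *)
Definition seg_shadows (d : nat) (sigma : R) (X Y : segment) : Prop :=
  forall q, in_seg Y q -> exists p, in_seg X p /\ dist d q p <= sigma * seg_diam d Y.

Definition same_set (s t : segment) : Prop := forall x, in_seg s x <-> in_seg t x.

(* The list L represents a finite set of segments: distinct entries are
   distinct point sets. *)
Definition distinct_segs (L : list segment) : Prop :=
  forall i j, (i < length L)%nat -> (j < length L)%nat -> i <> j ->
    ~ same_set (nth i L (fun _ => 0, fun _ => 0)) (nth j L (fun _ => 0, fun _ => 0)).

Definition exposed (d : nat) (sigma : R) (L : list segment) : Prop :=
  forall i j, (i < length L)%nat -> (j < length L)%nat -> i <> j ->
    ~ seg_shadows d sigma (nth i L (fun _ => 0, fun _ => 0)) (nth j L (fun _ => 0, fun _ => 0)).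

(* Main.v *)
Require Import Defs.
From Stdlib Require Import Reals List Lra Lia ZArith ClassicalEpsilon FunctionalExtensionality.
Open Scope R_scope.

Lemma sqdist_nonneg n x y : 0 <= sqdist n x y.
Proof. induction n; simpl; [lra|]. assert (0 <= (x n - y n)^2) by (apply pow2_ge_0). lra. Qed.

Lemma sqdist_coord n x y i : (i < n)%nat -> (x i - y i)^2 <= sqdist n x y.
Proof.
  induction n; intros Hi; [lia|]. simpl.
  destruct (Nat.eq_dec i n) as [->|Hne].
  - pose proof (sqdist_nonneg n x y); lra.
  - assert (0 <= (x n - y n)^2) by (apply pow2_ge_0). specialize (IHn ltac:(lia)). lra.
Qed.

Lemma sqdist_le n x y c : (forall i, (i < n)%nat -> (x i - y i)^2 <= c) -> sqdist n x y <= INR n * c.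
Proof.
  induction n; intros H; simpl sqdist; [simpl; lra|].
  rewrite S_INR. assert (sqdist n x y <= INR n * c) by (apply IHn; intros; apply H; lia).
  assert ((x n - y n)^2 <= c) by (apply H; lia). lra.
Qed.

Lemma diam_pos d s : is_segment d s -> 0 < seg_diam d s.
Proof.
  intros [Ha [Hb Hne]]. unfold seg_diam, dist. apply sqrt_lt_R0.
  destruct (Rle_lt_dec (sqdist d (fst s) (snd s)) 0) as [Hle|]; [|assumption].
  exfalso; apply Hne. apply functional_extensionality. intros i.
  destruct (Nat.lt_ge_cases i d) as [Hi|Hi].
  - pose proof (sqdist_coord d (fst s) (snd s) i Hi). nra.
  - rewrite (Ha i Hi), (Hb i Hi). reflexivity.
Qed.

Definition ecoord d (s : segment) i := (snd s i - fst s i) / seg_diam d s.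

Lemma ecoord_bound d s i : is_segment d s -> (i < d)%nat -> Rabs (ecoord d s i) <= 1.
Proof.
  intros Hs Hi. pose proof (diam_pos d s Hs) as HD. unfold ecoord.
  assert (Hb : Rabs (snd s i - fst s i) <= seg_diam d s).
  { unfold seg_diam, dist. rewrite <- (sqrt_pow2 (Rabs (snd s i - fst s i))) by apply Rabs_pos.
    apply sqrt_le_1_alt. rewrite pow2_abs.
    replace ((snd s i - fst s i)^2) with ((fst s i - snd s i)^2) by ring.
    apply sqdist_coord; auto. }
  assert (Hb' : - seg_diam d s <= snd s i - fst s i <= seg_diam d s) by (revert Hb; unfold Rabs; destruct Rcase_abs; intros; lra).
  set (e := (snd s i - fst s i) / seg_diam d s).
  assert (snd s i - fst s i = e * seg_diam d s) by (unfold e; field; lra).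
  apply Rabs_le. split; nra.
Qed.

Fixpoint code (N n : nat) (f : nat -> nat) : nat :=
  match n with O => O | S m => (f m + N * code N m f)%nat end.

Lemma code_lt N n f : (forall j, (j < n)%nat -> (f j < N)%nat) -> (code N n f < N ^ n)%nat.
Proof.
  induction n; intros H; simpl; [lia|].
  assert (code N n f < N^n)%nat by (apply IHn; intros; apply H; lia).
  assert (f n < N)%nat by (apply H; lia). nia.
Qed.

Lemma code_inj N n f g : (forall j, (j < n)%nat -> (f j < N)%nat) -> (forall j, (j < n)%nat -> (g j < N)%nat) ->
  code N n f = code N n g -> forall j, (j < n)%nat -> f j = g j.
Proof.
  induction n; intros Hf Hg E j Hj; [lia|]. simpl in E.
  assert (f n < N)%nat by (apply Hf; lia). assert (g n < N)%nat by (apply Hg; lia).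
  assert (Hc : code N n f = code N n g /\ f n = g n).
  { destruct (Nat.lt_total (code N n f) (code N n g)) as [Hl|[He|Hl]].
    - exfalso. nia.
    - split; [auto|]. rewrite He in E. lia.
    - exfalso. nia. }
  destruct Hc as [Hc Hn]. destruct (Nat.eq_dec j n) as [->|]; [auto|].
  apply IHn; auto; try (intros; (apply Hf || apply Hg); lia). lia.
Qed.

Lemma count_inj (n M : nat) (F : nat -> nat) : (forall i, (i < n)%nat -> (F i < M)%nat) ->
  (forall i j, (i < n)%nat -> (j < n)%nat -> i <> j -> F i <> F j) -> (n <= M)%nat.
Proof.
  intros HM HI.
  assert (ND : forall l, NoDup l -> (forall a, In a l -> a < n)%nat -> NoDup (map F l)).
  { induction l as [|a l IH]; intros Hnd Hin; simpl; [constructor|].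
    inversion Hnd; subst. constructor.
    - intros Hm. apply in_map_iff in Hm as [b [Hb Hbl]].
      apply (HI b a); auto. apply Hin; simpl; auto. apply Hin; simpl; auto.
      intros ->. contradiction.
    - apply IH; auto. intros; apply Hin; simpl; auto. }
  assert (H := @NoDup_incl_length nat (map F (seq 0 n)) (seq 0 M)).
  rewrite length_map, !length_seq in H. apply H.
  - apply ND; [apply seq_NoDup|]. intros a Ha; apply in_seq in Ha; lia.
  - intros b Hb. apply in_map_iff in Hb as [a [<- Ha]]. apply in_seq in Ha. apply in_seq. specialize (HM a ltac:(lia)). lia.
Qed.

Lemma abs_bnd a b : - b <= a <= b -> Rabs a <= b.
Proof. apply Rabs_le. Qed.
Lemma abs_unb a b : Rabs a <= b -> - b <= a <= b.
Proof. unfold Rabs; destruct Rcase_abs; intros; lra. Qed.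

Lemma shadow_core d sigma (X Y : segment) (x : point) tX tY h :
 is_segment d X -> is_segment d Y ->
 0 <= tX <= 1 -> (forall i, x i = fst X i + tX*(snd X i - fst X i)) ->
 0 <= tY <= 1 -> (forall i, x i = fst Y i + tY*(snd Y i - fst Y i)) ->
 seg_diam d Y <= seg_diam d X ->
 Rabs (tX - tY) <= h -> (forall i, (i<d)%nat -> Rabs (ecoord d X i - ecoord d Y i) <= h) ->
 INR d * (2*h)^2 <= sigma^2 -> 0 <= sigma ->
 seg_shadows d sigma X Y.
Proof.
  intros HX HY HtX HxX HtY HxY HD Ht He Hh Hs.
  pose proof (diam_pos d X HX) as DXp. pose proof (diam_pos d Y HY) as DYp.
  set (DX := seg_diam d X) in *. set (DY := seg_diam d Y) in *.
  intros q [s [Hs01 Hq]].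
  set (r := tX + DY/DX*(s - tX)).
  assert (Hl : 0 < DY/DX <= 1).
  { split. apply Rdiv_lt_0_compat; lra.
    apply Rmult_le_reg_r with DX; [lra|]. unfold Rdiv. rewrite Rmult_assoc, Rinv_l by lra. lra. }
  exists (fun i => fst X i + r*(snd X i - fst X i)). split.
  { exists r. split; [|intros; reflexivity]. unfold r. destruct (Rle_dec tX s).
    - assert (0 <= DY/DX*(s-tX) <= s - tX) by (split; [apply Rmult_le_pos; lra| nra]). lra.
    - assert (s - tX <= DY/DX*(s-tX) <= 0) by (assert (0 <= DY/DX*(tX-s)) by (apply Rmult_le_pos; lra); assert (DY/DX*(s-tX) = - (DY/DX*(tX-s))) by ring; split; nra). lra. }
  unfold dist.
  assert (h0 : 0 <= h) by (pose proof (Rabs_pos (tX - tY)); lra).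
  apply Rle_trans with (sqrt ((sigma*DY)^2)).
  2:{ rewrite sqrt_pow2. apply Rle_refl. apply Rmult_le_pos; lra. }
  apply sqrt_le_1_alt.
  apply Rle_trans with (INR d * (2*h*DY)^2).
  2:{ replace (INR d * (2*h*DY)^2) with (INR d * (2*h)^2 * DY^2) by ring.
      replace ((sigma*DY)^2) with (sigma^2*DY^2) by ring.
      apply Rmult_le_compat_r; [apply pow2_ge_0|lra]. }
  apply sqdist_le. intros i Hi. apply pow_maj_Rabs.
  set (eX := ecoord d X i). set (eY := ecoord d Y i).
  assert (HeX : Rabs eX <= 1) by (apply ecoord_bound; auto).
  assert (Hei : Rabs (eX - eY) <= h) by (apply He; auto).
  rewrite Hq.
  assert (E : fst Y i + s * (snd Y i - fst Y i) - (fst X i + r * (snd X i - fst X i))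
     - DY*((s-tY)*(eY-eX) + (tX-tY)*eX) =
     (fst Y i + tY*(snd Y i - fst Y i)) - (fst X i + tX*(snd X i - fst X i))).
  { unfold eX, eY, ecoord, r. fold DX DY. field. lra. }
  rewrite <- HxX, <- HxY in E.
  replace (fst Y i + s * (snd Y i - fst Y i) - (fst X i + r * (snd X i - fst X i)))
    with (DY*((s-tY)*(eY-eX) + (tX-tY)*eX)) by lra.
  assert (HA : Rabs (s - tY) <= 1) by (apply abs_bnd; lra).
  rewrite Rabs_minus_sym in Hei.
  rewrite Rabs_mult, (Rabs_pos_eq DY) by lra.
  replace (2*h*DY) with (DY * (1*h + h*1)) by ring.
  apply Rmult_le_compat_l; [lra|].
  eapply Rle_trans; [apply Rabs_triang|].
  rewrite !Rabs_mult.
  apply Rplus_le_compat; apply Rmult_le_compat; try apply Rabs_pos; auto.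
Qed.

Definition dig h y := Z.to_nat (up ((y+1)/h)).
Definition Nbig h := Z.to_nat (up (2/h + 1)).

Lemma up_pos r : 0 <= r -> (0 <= up r)%Z.
Proof. intros. destruct (archimed r). apply le_IZR. apply Rlt_le. lra. Qed.

Lemma dig_lt h y : 0 < h -> -1 <= y <= 1 -> (dig h y < Nbig h)%nat.
Proof.
  intros Hh Hy. unfold dig, Nbig.
  assert (0 <= (y+1)/h) by (apply Rmult_le_pos; [lra| left; apply Rinv_0_lt_compat; lra]).
  assert ((y+1)/h <= 2/h) by (apply Rmult_le_compat_r; [left; apply Rinv_0_lt_compat; lra| lra]).
  assert (0 <= 2/h) by lra.
  apply Z2Nat.inj_lt; try apply up_pos; try lra.
  apply lt_IZR. destruct (archimed ((y+1)/h)). destruct (archimed (2/h+1)). lra.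
Qed.

Lemma dig_close h y1 y2 : 0 < h -> -1 <= y1 <= 1 -> -1 <= y2 <= 1 -> dig h y1 = dig h y2 -> Rabs (y1 - y2) <= h.
Proof.
  intros Hh H1 H2 E. unfold dig in E.
  assert (P : forall y, -1 <= y <= 1 -> 0 <= (y+1)/h) by (intros; apply Rmult_le_pos; [lra| left; apply Rinv_0_lt_compat; lra]).
  apply Z2Nat.inj in E; try (apply up_pos; apply P; auto).
  destruct (archimed ((y1+1)/h)) as [a1 b1]. destruct (archimed ((y2+1)/h)) as [a2 b2].
  rewrite E in a1, b1.
  assert (Rabs ((y1+1)/h - (y2+1)/h) <= 1) by (apply abs_bnd; lra).
  replace ((y1+1)/h - (y2+1)/h) with ((y1 - y2)/h) in H by (field; lra).
  unfold Rdiv in H. rewrite Rabs_mult, Rabs_inv, (Rabs_pos_eq h) in H by lra.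
  apply Rmult_le_reg_r with (/h); [apply Rinv_0_lt_compat; lra|]. rewrite Rinv_r by lra. lra.
Qed.

Lemma Nbig_bound h : 0 < h -> INR (Nbig h) <= 2/h + 2.
Proof.
  intros Hh. unfold Nbig. rewrite INR_IZR_INZ, Z2Nat.id.
  - destruct (archimed (2/h+1)). lra.
  - apply up_pos. assert (0 < 2/h) by (apply Rdiv_lt_0_compat; lra). lra.
Qed.

Definition tpar (x : point) (s : segment) : R :=
  epsilon (inhabits 0) (fun t => 0 <= t <= 1 /\ forall i, x i = fst s i + t * (snd s i - fst s i)).

Definition val d x s j := match j with O => tpar x s | S k => ecoord d s k end.

Theorem mainTheorem6 :
  forall d : nat, (1 <= d)%nat ->
  exists C : R,
    forall (sigma : R) (L : list segment),
      0 < sigma < 1 ->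
      (forall s, In s L -> is_segment d s) ->
      distinct_segs L ->
      exposed d sigma L ->
      (exists x : point, forall s, In s L -> in_seg s x) ->
      INR (length L) <= C / sigma ^ (d + 2).
Proof.
  intros d Hd. exists ((4*INR d + 2)^(S d)).
  intros sigma L Hs Hseg _ Hexp [x Hx].
  assert (Hd1 : 1 <= INR d) by (apply (le_INR 1); lia).
  set (h := sigma/(2*INR d)).
  assert (hpos : 0 < h) by (apply Rdiv_lt_0_compat; lra).
  set (N := Nbig h).
  set (dflt := (fun _ : nat => 0, fun _ : nat => 0) : segment).
  set (F := fun i => code N (S d) (fun j => dig h (val d x (nth i L dflt) j))).
  assert (Htp : forall s, In s L -> 0 <= tpar x s <= 1 /\ forall i, x i = fst s i + tpar x s * (snd s i - fst s i)).
  { intros s Hin. unfold tpar. apply epsilon_spec. destruct (Hx s Hin) as [t Ht]. exists t. exact Ht. }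
  assert (Hval : forall s j, In s L -> (j < S d)%nat -> -1 <= val d x s j <= 1).
  { intros s j Hin Hj. destruct j as [|k]; simpl.
    - destruct (Htp s Hin); lra.
    - apply abs_unb. apply ecoord_bound; [auto|lia]. }
  assert (Hlen : (length L <= N ^ (S d))%nat).
  { apply (count_inj _ _ F).
    - intros i Hi. apply code_lt. intros j Hj. apply dig_lt; auto. apply Hval; auto. apply nth_In; auto.
    - intros i j Hi Hj Hij E. unfold F in E.
      assert (E' := code_inj N (S d) (fun k => dig h (val d x (nth i L dflt) k)) (fun k => dig h (val d x (nth j L dflt) k))
           ltac:(intros k Hk; apply dig_lt; auto; apply Hval; auto; apply nth_In; auto)
           ltac:(intros k Hk; apply dig_lt; auto; apply Hval; auto; apply nth_In; auto) E). clear E. rename E' into E.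
      simpl in E.
      set (X := nth i L dflt) in *. set (Y := nth j L dflt) in *.
      assert (HXi : In X L) by (apply nth_In; auto). assert (HYi : In Y L) by (apply nth_In; auto).
      assert (Hcl : forall k, (k < S d)%nat -> Rabs (val d x X k - val d x Y k) <= h).
      { intros k Hk. apply dig_close; auto. }
      assert (Hhs : INR d * (2*h)^2 <= sigma^2).
      { replace (INR d * (2*h)^2) with (sigma^2 / INR d) by (unfold h; field; lra).
        apply Rmult_le_reg_r with (INR d); [lra|]. unfold Rdiv. rewrite Rmult_assoc, Rinv_l by lra.
        assert (0 <= sigma^2) by apply pow2_ge_0. nra. }
      destruct (Htp X HXi) as [tX1 tX2]. destruct (Htp Y HYi) as [tY1 tY2].
      assert (Ht : Rabs (tpar x X - tpar x Y) <= h) by (apply (Hcl 0%nat); lia).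
      assert (He : forall k, (k < d)%nat -> Rabs (ecoord d X k - ecoord d Y k) <= h).
      { intros k Hk. apply (Hcl (S k)); lia. }
      destruct (Rle_dec (seg_diam d Y) (seg_diam d X)).
      + apply (Hexp i j Hi Hj Hij).
        apply (shadow_core d sigma X Y x (tpar x X) (tpar x Y) h); auto; lra.
      + apply (Hexp j i Hj Hi (not_eq_sym Hij)).
        apply (shadow_core d sigma Y X x (tpar x Y) (tpar x X) h); auto; try lra.
        rewrite Rabs_minus_sym; auto.
        intros k Hk. rewrite Rabs_minus_sym; auto. }
  apply le_INR in Hlen. rewrite pow_INR in Hlen.
  eapply Rle_trans; [exact Hlen|].
  assert (HN := Nbig_bound h hpos). fold N in HN.
  assert (E2 : 2/h + 2 <= (4*INR d + 2)/sigma).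
  { replace (2/h) with (4*INR d/sigma) by (unfold h; field; lra).
    replace ((4*INR d + 2)/sigma) with (4*INR d/sigma + 2/sigma) by (field; lra).
    assert (2 <= 2/sigma); [|lra].
    apply Rmult_le_reg_r with sigma; [lra|]. unfold Rdiv. rewrite Rmult_assoc, Rinv_l by lra. lra. }
  apply Rle_trans with (((4*INR d + 2)/sigma)^(S d)).
  { apply pow_incr. split; [apply pos_INR|lra]. }
  unfold Rdiv. rewrite Rpow_mult_distr.
  apply Rmult_le_compat_l; [apply pow_le; lra|].
  rewrite <- !pow_inv.
  replace (d+2)%nat with (S (S d)) by lia.
  simpl. rewrite <- (Rmult_1_l (/sigma * _)) at 1.
  apply Rmult_le_compat_r.
  - apply Rmult_le_pos. left; apply Rinv_0_lt_compat; lra. apply pow_le. left; apply Rinv_0_lt_compat; lra.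
  - apply Rmult_le_reg_r with sigma; [lra|]. rewrite Rinv_l by lra. lra.
Qed.
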